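(* Let $S_1\subseteq S$ with $|S_1|>1$ and $a>0$, and let $q$ be an irreducible transition matrix on $S$ such that $\mathbf P_{s,q}\big(T^+_{\overline{S_1}\cup\{t\}}=T^+_{\{t\}}\big)\ge a$ for all $s,t\in S_1$. Then for every $y\in S_1$ there exists a $(a/L)^{|S|}$-maximal graph $\overline g\in G(S_1\setminus\{y\})$ such that every path of $\overline g$ leads to $y$.
   Context: $S$ is a finite set with $|S|\ge2$, $\overline C=S\setminus C$. $(\mathbf s_n)_{n\ge0}$ is a Markov chain with transition matrix $q$, $\mathbf P_{s,q}$ its law from $\mathbf s_0=s$, and $T^+_D=\min\{n\ge1:\mathbf s_n\in D\}$ ($\min\emptyset=+\infty$). For $C\subseteq S$, a $C$-graph is a directed graph on vertex set $S$ without cycles such that each $s\in C$ has exactly one outgoing edge $(s,g(s))$ and no state outside $C$ has an outgoing edge; from $s\in C$, following the edges one reaches a unique state of $\overline C$, to which $s$ is said to lead. $G(C)$ is the set of $C$-graphs, $p(g)=\prod_{s\in C}q(g(s)\mid s)$, and for $\eta>0$, $g$ is $\eta$-maximal if $p(g)\ge\eta\max_{g'\in G(C)}p(g')$. $L=\sum_{n=1}^{|S|-1}\binom{|S|}{n}n^{|S|}$. *)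

(* Defs.v *)
From HB Require Import structures.
From mathcomp Require Import all_boot all_order all_algebra.
From mathcomp Require Import all_classical all_reals all_analysis.
Set Implicit Arguments. Unset Strict Implicit. Unset Printing Implicit Defensive.
Import Order.TTheory GRing.Theory Num.Theory.
Import numFieldNormedType.Exports.
Local Open Scope ring_scope.

Section MC.
Variables (R : realType) (S : finType).

(* A transition matrix: q x y = q(y | x), probability of jumping from x to y. *)
Definition stochastic (q : S -> S -> R) : Prop :=
  (forall x y, 0 <= q x y) /\ (forall x, \sum_(y : S) q x y = 1).

(* Probability under P_{x,q} of the cylinder (s_1,...,s_n) = w. *)
Definition path_prob (q : S -> S -> R) (x : S) (n : nat) (w : n.-tuple S) : R :=
  \prod_(k < n) q (nth x (x :: w) k) (nth x w k).

Definition irreducible (q : S -> S -> R) : Prop :=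
  forall x y : S, exists n : nat, exists w : n.-tuple S,
    last x w = y /\ 0 < path_prob q x w.

(* P_{x,q}(T^+_A = n+1 and s_{n+1} = t) *)
Definition hit_at (q : S -> S -> R) (x : S) (A : {set S}) (t : S) (n : nat) : R :=
  \sum_(w : n.+1.-tuple S | all (fun z => z \notin A) (take n w) && (last x w == t))
     path_prob q x w.

(* P_{x,q}(T^+_A > n) *)
Definition avoid_upto (q : S -> S -> R) (x : S) (A : {set S}) (n : nat) : R :=
  \sum_(w : n.-tuple S | all (fun z => z \notin A) w) path_prob q x w.

(* P_{x,q}(T^+_A = T^+_{t}) for t \in A:
   the event is {T^+_A < oo and s_{T^+_A} = t} \cup {T^+_A = +oo}. *)
Definition prob_first_hit (q : S -> S -> R) (x : S) (A : {set S}) (t : S) : R :=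
  limn (fun N => \sum_(0 <= n < N) hit_at q x A t n)
  + limn (avoid_upto q x A).

Definition edge_rel (E : {set S * S}) : rel S := fun a b => (a, b) \in E.

Definition is_Cgraph (C : {set S}) (E : {set S * S}) : Prop :=
  (forall s, s \in C -> exists! t, (s, t) \in E) /\
  (forall s t, s \notin C -> (s, t) \notin E) /\
  (forall a b, (a, b) \in E -> ~~ connect (edge_rel E) b a).

Definition is_Cgraphb (C : {set S}) (E : {set S * S}) : bool :=
  `[< is_Cgraph C E >].

(* p(g) = prod_{s in C} q(g(s) | s) = product over the edges of g *)
Definition pgraph (q : S -> S -> R) (E : {set S * S}) : R :=
  \prod_(e in E) q e.1 e.2.

Definition max_pgraph (q : S -> S -> R) (C : {set S}) : R :=
  \big[Num.max/0]_(E : {set S * S} | is_Cgraphb C E) pgraph q E.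

Definition eta_maximal (q : S -> S -> R) (eta : R) (C : {set S}) (E : {set S * S}) : Prop :=
  is_Cgraph C E /\ eta * max_pgraph q C <= pgraph q E.

Definition leads_to (C : {set S}) (E : {set S * S}) (s u : S) : Prop :=
  u \notin C /\ connect (edge_rel E) s u.

End MC.

Definition Lconst (N : nat) : nat := \sum_(1 <= n < N) 'C(N, n) * n ^ N.

(* Main.v *)
Require Import Defs.
From HB Require Import structures.
From mathcomp Require Import all_boot all_order all_algebra.
From mathcomp Require Import all_classical all_reals all_analysis.
Import Order.TTheory GRing.Theory Num.Theory.
Local Open Scope ring_scope.


From mathcomp Require Import ring lra zify.
Set Implicit Arguments. Unset Strict Implicit. Unset Printing Implicit Defensive.
Import numFieldNormedType.Exports.

Lemma connect_ind_back (T : finType) (e : rel T) (a : T) (P : T -> Prop) :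
  P a -> (forall z w, e z w -> connect e w a -> P w -> P z) ->
  forall b, connect e b a -> P b.
Proof.
move=> Pa IH b /connectP [p]; elim: p b => [|c p IHp] b /=.
  by move=> _ <-.
move=> /andP[ebc pc] la; apply: (IH b c ebc).
  by apply/connectP; exists p.
exact: IHp pc la.
Qed.

Lemma connect_step (T : finType) (e : rel T) x y :
  connect e x y -> x != y -> exists2 w, e x w & connect e w y.
Proof.
case/connectP => p; case: p => [|c p] /=.
  by move=> _ yx; rewrite yx eqxx.
move=> /andP[exc pc] yl _; exists c => //; apply/connectP; exists p => //.
Qed.

Section Graphs.
Variable S : finType.
Implicit Types (C : {set S}) (E : {set S * S}).

Lemma edgeC E a b : (a, b) \in E -> connect (edge_rel E) a b.
Proof. by move=> ab; apply: connect1. Qed.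

Definition succ E (x : S) : S := odflt x [pick t | (x, t) \in E].

Lemma edge_src C E x t : is_Cgraph C E -> (x, t) \in E -> x \in C.
Proof.
move=> [_ [H2 _]] xt; apply/negPn/negP => xC.
by move: (H2 x t xC); rewrite xt.
Qed.

Lemma succP C E x : is_Cgraph C E -> x \in C -> (x, succ E x) \in E.
Proof.
move=> [H1 _] xC; rewrite /succ; case: pickP => [t //|none].
by case: (H1 x xC) => t [xt _]; move: (none t); rewrite xt.
Qed.

Lemma succ_uniq C E x t : is_Cgraph C E -> (x, t) \in E -> t = succ E x.
Proof.
move=> G xt; have xC := edge_src G xt.
have G0 := G; case: G0 => [H1 _]; case: (H1 x xC) => t0 [_ U].
rewrite -(U t xt); apply: U; exact: (succP G).
Qed.

Lemma succ_out C E x : is_Cgraph C E -> x \notin C -> succ E x = x.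
Proof.
move=> [_ [H2 _]] xC; rewrite /succ; case: pickP => [t xt|//].
by move: (H2 x t xC); rewrite xt.
Qed.

Lemma no_loop C E x t : is_Cgraph C E -> (x, t) \in E -> t != x.
Proof.
move=> [_ [_ H3]] xt; apply/eqP => tx; move: (H3 x t xt); rewrite tx connect0.
done.
Qed.

Lemma terminal C E z w : is_Cgraph C E -> z \notin C ->
  connect (edge_rel E) z w -> w = z.
Proof.
move=> G zC c; case: (eqVneq z w) => [//|nzw].
case: (connect_step c nzw) => v zv _.
by move: (edge_src G zv); rewrite (negbTE zC).
Qed.

Lemma functional_path C E u x y : is_Cgraph C E -> y \notin C ->
  connect (edge_rel E) u x -> connect (edge_rel E) u y ->
  connect (edge_rel E) x y.
Proof.
move=> G yC ux uy; move: uy ux; apply: (@connect_ind_back _ _ y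
  (fun z => connect (edge_rel E) z x -> connect (edge_rel E) x y)).
  by move=> yx; rewrite (terminal G yC yx) connect0.
move=> z w zw wy IH zx.
case: (eqVneq z x) => [<-|nzx].
  by apply: connect_trans (connect1 zw) wy.
case: (connect_step zx nzx) => w' zw' w'x.
have G1 := succ_uniq G zw; have G2 := succ_uniq G zw'.
by apply: IH; rewrite G1 -G2.
Qed.

Definition redirect E x u : {set S * S} := (x, u) |: [set e in E | e.1 != x].

Lemma redirectE E x u a b : ((a, b) \in redirect E x u) =
  ((a == x) && (b == u)) || (((a, b) \in E) && (a != x)).
Proof. by rewrite /redirect !inE xpair_eqE. Qed.

Lemma connect_redirect_to C E x u z : is_Cgraph C E ->
  connect (edge_rel (redirect E x u)) z x -> connect (edge_rel E) z x.
Proof.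
move=> G; apply: (@connect_ind_back _ _ x (fun z => connect (edge_rel E) z x)).
  exact: connect0.
move=> a b ab _ bx; case: (eqVneq a x) => [->|nax]; first exact: connect0.
have {}ab : (a, b) \in E by move: ab; rewrite /edge_rel redirectE (negbTE nax) /= andbT.
exact: connect_trans (edgeC ab) bx.
Qed.

Lemma redirect_valid C E x u : is_Cgraph C E -> x \in C ->
  ~~ connect (edge_rel E) u x -> is_Cgraph C (redirect E x u).
Proof.
move=> G xC nux; have G0 := G; case: G0 => [H1 [H2 H3]].
split; [|split].
- move=> s sC; case: (eqVneq s x) => [->|nsx].
    exists u; split; first by rewrite redirectE !eqxx.
    by move=> t; rewrite redirectE eqxx /= andbF orbF => /eqP ->.
  case: (H1 s sC) => t [st U]; exists t; split.
    by rewrite redirectE (negbTE nsx) /= st.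
  by move=> t'; rewrite redirectE (negbTE nsx) /= => /andP[/U].
- move=> s t sC; rewrite redirectE negb_or; apply/andP; split.
    by apply/negP => /andP[/eqP sx _]; move: sC; rewrite sx xC.
  by rewrite negb_and (H2 s t sC).
- move=> a b ab.
  pose E' := redirect E x u.
  pose P := fun z => connect (edge_rel E) z a \/
      (connect (edge_rel E) z x /\ connect (edge_rel E) u a).
  have key : forall z, connect (edge_rel E') z a -> P z.
    apply: connect_ind_back; first by left; exact: connect0.
    move=> z w zw _; rewrite /P => Pw; move: zw; rewrite [edge_rel _ _ _]redirectE.
    case/orP => [/andP[/eqP zx /eqP wu]|/andP[zwE nzx]].
      right; split; first by rewrite zx connect0.
      by rewrite wu in Pw; case: Pw => [//|[]].
    case: Pw => [wa|[wx ua]]; first by left; exact: connect_trans (edgeC zwE) wa.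
    by right; split=> //; exact: connect_trans (edgeC zwE) wx.
  apply/negP => /key; rewrite /P; move: ab; rewrite redirectE.
  case/orP => [/andP[/eqP ax /eqP bu]|/andP[abE nax]].
    rewrite ax bu => -[ux|[ux _]]; by move: nux; rewrite ux.
  case=> [ba|[bx ua]]; first by move: (H3 a b abE); rewrite ba.
  move: nux; rewrite (connect_trans ua (connect_trans (edgeC abE) bx)) //.
Qed.

Lemma redirect_leads C E x u y : is_Cgraph C E -> 
  ~~ connect (edge_rel E) u x -> connect (edge_rel E) u y ->
  connect (edge_rel (redirect E x u)) u y.
Proof.
move=> G nux uy.
pose P := fun z => connect (edge_rel E) z x \/ connect (edge_rel (redirect E x u)) z y.
have : P u.
  move: uy; apply: (@connect_ind_back _ _ y P); first by right; exact: connect0.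
  move=> z w zw _; rewrite /P => -[wx|wy]; first by left; exact: connect_trans (connect1 zw) wx.
  case: (eqVneq z x) => [->|nzx]; first by left; exact: connect0.
  right; apply: connect_trans _ wy; apply: connect1.
  by rewrite [edge_rel _ _ _]redirectE nzx andbT; apply/orP; right.
by rewrite /P; case=> // ux; move: nux; rewrite ux.
Qed.

End Graphs.


Lemma sum_subset_le (R : realType) (J : finType) (A : {set J}) (Q : pred J) (G : J -> R) :
  (forall j, j \in A -> Q j) -> (forall j, Q j -> 0 <= G j) ->
  \sum_(j in A) G j <= \sum_(j | Q j) G j.
Proof.
move=> AQ G0; rewrite [X in _ <= X]big_mkcond [X in X <= _]big_mkcond /=.
apply: ler_sum => j _; case: ifP => jA; first by rewrite (AQ j jA).
by case: ifP => // /G0.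
Qed.

Lemma sum_inj_le (R : realType) (I J : finType) (P : pred I) (Q : pred J) (f : I -> J)
  (F : I -> R) (G : J -> R) :
  {in P &, injective f} -> (forall i, P i -> Q (f i)) ->
  (forall i, P i -> F i = G (f i)) -> (forall j, Q j -> 0 <= G j) ->
  \sum_(i | P i) F i <= \sum_(j | Q j) G j.
Proof.
move=> inj PQ FG G0.
rewrite (eq_bigr (fun i => G (f i))) //.
have -> : \sum_(i | P i) G (f i) = \sum_(i in P) G (f i) by [].
rewrite -big_imset //; apply: sum_subset_le => // j /imsetP [i Pi ->].
exact: PQ.
Qed.

Section Harm.
Variables (R : realType) (S : finType) (q : S -> S -> R).
Hypothesis qst : stochastic q.
Variables (C : {set S}) (y : S).
Hypothesis yC : y \notin C.
Implicit Types (E : {set S * S}).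

Lemma is_CgraphbP E : reflect (is_Cgraph C E) (is_Cgraphb C E).
Proof. exact: asboolP. Qed.

Definition Hs (u : S) : R :=
  \sum_(E | is_Cgraphb C E && connect (edge_rel E) u y) pgraph q E.

Lemma q_ge0 a b : 0 <= q a b. Proof. by case: qst. Qed.

Lemma pgraph_ge0 E : 0 <= pgraph q E.
Proof. by apply: prodr_ge0 => e _; apply: q_ge0. Qed.

Lemma redirect_succ E x u : (x, u) \in redirect E x u.
Proof. by rewrite redirectE !eqxx. Qed.

Lemma redirect_back E x u : is_Cgraph C E -> x \in C ->
  redirect (redirect E x u) x (succ E x) = E.
Proof.
move=> G xC; apply/setP => -[a b]; rewrite !redirectE.
case: (eqVneq a x) => [->|nax] /=; last by rewrite !andbT.
rewrite !andbF orbF; apply/eqP/idP => [->|xb]; first exact: succP G xC.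
by rewrite -(succ_uniq G xb).
Qed.

Lemma pgraph_redirect E x u : is_Cgraph C E -> x \in C ->
  pgraph q (redirect E x u) * q x (succ E x) = q x u * pgraph q E.
Proof.
move=> G xC; rewrite /pgraph /redirect big_setU1 /=; last first.
  by rewrite !inE eqxx andbF.
rewrite [X in _ = _ * X](bigD1 (x, succ E x)) /=; last by have := succP G xC.
rewrite -mulrA; congr (_ * _); rewrite mulrC; congr (_ * _).
apply: eq_bigl => -[a b]; rewrite !inE /= xpair_eqE.
case: (eqVneq a x) => [->|nax] /=; last by rewrite andbT.
rewrite andbF; apply/esym/negbTE/negP => /andP[xb].
by rewrite -(succ_uniq G xb) eqxx.
Qed.

Lemma no_cycle_succ E x : is_Cgraph C E -> x \in C ->
  ~~ connect (edge_rel E) (succ E x) x.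
Proof. by move=> G xC; have [_ [_ H3]] := G; apply: H3; exact: succP G xC. Qed.

Lemma superharm x : x \in C -> \sum_u q x u * Hs u <= Hs x.
Proof.
move=> xC.
have -> : \sum_u q x u * Hs u = \sum_(pr : S * {set S * S} |
    true && (is_Cgraphb C pr.2 && connect (edge_rel pr.2) pr.1 y))
    q x pr.1 * pgraph q pr.2.
  rewrite -(pair_big_dep predT (fun u E => is_Cgraphb C E && connect (edge_rel E) u y)
    (fun u E => q x u * pgraph q E)) /=.
  by apply: eq_bigr => u _; rewrite /Hs mulr_sumr.
have -> : Hs x = \sum_(pr : {set S * S} * S |
    (is_Cgraphb C pr.1 && connect (edge_rel pr.1) x y) && true)
    pgraph q pr.1 * q x pr.2.
  rewrite -(pair_big_dep (fun E => is_Cgraphb C E && connect (edge_rel E) x y)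
    (fun _ _ => true) (fun E v => pgraph q E * q x v)) /=.
  by apply: eq_bigr => E _; rewrite -mulr_sumr qst.2 mulr1.
apply: (@sum_inj_le _ _ _ _ _ (fun pr => if connect (edge_rel pr.2) pr.1 x
   then (pr.2, pr.1) else (redirect pr.2 x pr.1, succ pr.2 x))).
- move=> [u1 E1] [u2 E2]; rewrite /= => /andP[/is_CgraphbP G1 c1]
    /andP[/is_CgraphbP G2 c2].
  rewrite /= in G1 G2 c1 c2 *.
  case: ifP => h1; case: ifP => h2.
  + by case=> -> ->.
  + case=> e1 e2; rewrite e1 e2 in h1.
    by move: (no_cycle_succ G2 xC); rewrite (connect_redirect_to G2 h1).
  + case=> e1 e2; rewrite -e1 -e2 in h2.
    by move: (no_cycle_succ G1 xC); rewrite (connect_redirect_to G1 h2).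
  + case=> e1 e2.
    have V1 := redirect_valid G1 xC (negbT h1).
    have V2 := redirect_valid G2 xC (negbT h2).
    have U1 := succ_uniq V1 (redirect_succ E1 x u1).
    have U2 := succ_uniq V2 (redirect_succ E2 x u2).
    have eu : u1 = u2 by rewrite U1 U2 e1.
    subst u2; congr (_, _).
    by rewrite -(redirect_back u1 G1 xC) -(redirect_back u1 G2 xC) e1 e2.
- move=> [u E] /= /andP[/is_CgraphbP G c]; rewrite /= in G c *; case: ifP => h /=.
    rewrite andbT; apply/andP; split; first exact/is_CgraphbP.
    exact: functional_path G yC h c.
  rewrite andbT; apply/andP; split.
    by apply/is_CgraphbP; apply: redirect_valid G xC (negbT h).
  apply: connect_trans (edgeC (redirect_succ E x u)) _.
  exact: redirect_leads G (negbT h) c.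
- move=> [u E] /= /andP[/is_CgraphbP G c]; rewrite /= in G c *; case: ifP => h /=.
    by rewrite mulrC.
  by rewrite pgraph_redirect.
- by move=> [E v] _ /=; apply: mulr_ge0; [apply: pgraph_ge0|apply: q_ge0].
Qed.

End Harm.


Section Rec.
Variables (R : realType) (S : finType) (q : S -> S -> R).

Lemma sum_tuple_cons n (P : pred (n.+1.-tuple S)) (F : n.+1.-tuple S -> R) :
  \sum_(w | P w) F w =
  \sum_u \sum_(w : n.-tuple S | P [tuple of u :: w]) F [tuple of u :: w].
Proof.
rewrite (reindex (fun p : S * n.-tuple S => [tuple of p.1 :: p.2])) /=; last first.
  exists (fun w : n.+1.-tuple S => (thead w, [tuple of behead w])).
    move=> [u w] _ /=; rewrite theadE; congr pair; exact: val_inj.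
  by move=> w _ /=; rewrite [RHS]tuple_eta.
rewrite pair_big_dep /=; apply: eq_big => [[u w]|[u w] _] //=.
Qed.

Lemma sum_tuple0 (P : pred (0.-tuple S)) (F : 0.-tuple S -> R) :
  \sum_(w | P w) F w = if P [tuple] then F [tuple] else 0.
Proof.
rewrite big_mkcond (big_pred1 [tuple]) // => w /=; apply/esym/eqP; exact: tuple0.
Qed.

Lemma path_prob_cons x n u (w : n.-tuple S) :
  path_prob q x [tuple of u :: w] = q x u * path_prob q u w.
Proof.
rewrite /path_prob big_ord_recl /=; congr (_ * _); apply: eq_bigr => i _ /=.
rewrite /bump /=.
have i1 : (i < size (u :: w))%N by rewrite /= size_tuple ltnS ltnW.
have i2 : (i < size w)%N by rewrite size_tuple.
by rewrite (set_nth_default u x i1) (set_nth_default u x i2).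
Qed.

Lemma path_prob0 x : path_prob q x [tuple] = 1.
Proof. by rewrite /path_prob big_ord0. Qed.

Variables (A : {set S}) (t : S).

Lemma hit0 x : hit_at q x A t 0 = q x t.
Proof.
rewrite /hit_at sum_tuple_cons.
rewrite (eq_bigr (fun u => if u == t then q x u else 0)).
  by rewrite -big_mkcond /= big_pred1_eq.
move=> u _; rewrite sum_tuple0 /= path_prob_cons path_prob0 mulr1.
by [].
Qed.

Lemma hitS x n : hit_at q x A t n.+1 =
  \sum_(u | u \notin A) q x u * hit_at q u A t n.
Proof.
rewrite /hit_at sum_tuple_cons [RHS]big_mkcond /=; apply: eq_bigr => u _.
case: ifP => uA.
  rewrite mulr_sumr; apply: eq_big => [w|w _]; last by rewrite path_prob_cons.
  by [].
by rewrite /= big_pred0_eq.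
Qed.

Lemma avoid0 x : avoid_upto q x A 0 = 1.
Proof. by rewrite /avoid_upto sum_tuple0 /= path_prob0. Qed.

Lemma avoidS x n : avoid_upto q x A n.+1 =
  \sum_(u | u \notin A) q x u * avoid_upto q u A n.
Proof.
rewrite /avoid_upto sum_tuple_cons [RHS]big_mkcond /=; apply: eq_bigr => u _.
case: ifP => uA.
  rewrite mulr_sumr; apply: eq_big => [w|w _]; last by rewrite path_prob_cons.
  by [].
by rewrite /= big_pred0_eq.
Qed.

End Rec.


Section Lim.
Variables (R : realType) (S : finType) (q : S -> S -> R).
Hypothesis qst : stochastic q.
Variables (A : {set S}) (t : S).
Hypothesis tA : t \in A.

Lemma path_prob_ge0 x n (w : n.-tuple S) : 0 <= path_prob q x w.
Proof. by apply: prodr_ge0 => i _; apply: (q_ge0 qst). Qed.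

Lemma ht_ge0 x n : 0 <= hit_at q x A t n.
Proof. by apply: sumr_ge0 => w _; apply: path_prob_ge0. Qed.

Lemma av_ge0 x n : 0 <= avoid_upto q x A n.
Proof. by apply: sumr_ge0 => w _; apply: path_prob_ge0. Qed.

Lemma step_ineq n x :
  hit_at q x A t n + avoid_upto q x A n.+1 <= avoid_upto q x A n.
Proof.
elim: n x => [|n IH] x.
  rewrite hit0 avoidS avoid0 -(proj2 qst x) [X in _ <= X](bigID (fun u => u \in A)) /=.
  apply: lerD; last by apply: ler_sum => u _; rewrite avoid0 mulr1.
  rewrite (bigD1 t) //= lerDl; apply: sumr_ge0 => u _; apply: (q_ge0 qst).
rewrite hitS !avoidS -big_split /=; apply: ler_sum => u _.
by rewrite -mulrDr; apply: ler_wpM2l; [apply: (q_ge0 qst)|apply: IH].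
Qed.

Definition Fs x N := \sum_(0 <= n < N) hit_at q x A t n + avoid_upto q x A N.

Lemma Fs_decr x N : Fs x N.+1 <= Fs x N.
Proof.
rewrite /Fs big_nat_recr //= -addrA lerD2l; exact: step_ineq.
Qed.

Lemma Fs0 x : Fs x 0 = 1.
Proof. by rewrite /Fs big_geq // add0r avoid0. Qed.

Lemma prob_le x N : prob_first_hit q x A t <= Fs x N.
Proof.
set u := fun N => \sum_(0 <= n < N) hit_at q x A t n.
set v := avoid_upto q x A.
have Fd : {homo (fun N => Fs x N) : n m / (n <= m)%N >-> (m <= n)}.
  by apply/nonincreasing_seqP => n; apply: Fs_decr.
have ud : {homo u : n m / (n <= m)%N >-> (n <= m)}.
  apply/nondecreasing_seqP => n; rewrite /u big_nat_recr //= lerDl.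
  exact: ht_ge0.
have vd : {homo v : n m / (n <= m)%N >-> (m <= n)}.
  apply/nonincreasing_seqP => n; rewrite /v.
  have := step_ineq n x; have := ht_ge0 x n; lra.
have ub : has_ubound (range u).
  exists 1 => _ [n _ <-]; rewrite -(Fs0 x).
  apply: le_trans (_ : Fs x n <= _); last by apply: Fd.
  by rewrite /Fs lerDl; apply: av_ge0.
have lb : has_lbound (range v).
  by exists 0 => _ [n _ <-]; apply: av_ge0.
have cu : cvgn u by apply: cvgP (nondecreasing_cvgn ud ub).
have cv : cvgn v by apply: cvgP (nonincreasing_cvgn vd lb).
rewrite /prob_first_hit -/u -/v.
have -> : limn u + limn v = limn (u \+ v) by rewrite limD.
have cuv : cvgn (u \+ v) by apply: is_cvgD.
by apply: (nonincreasing_cvgn_ge Fd).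
Qed.

End Lim.


Section Decay.
Variables (R : realType) (S : finType) (q : S -> S -> R).
Hypothesis qst : stochastic q.
Variables (A : {set S}) (E : {set S * S}).
Hypothesis G : is_Cgraph (~: A) E.
Hypothesis pE : 0 < pgraph q E.

Fixpoint delta j x : R := if x \in A then 1 else
  if j is j'.+1 then q x (succ E x) * delta j' (succ E x) else 0.

Lemma delta_ge0 j x : 0 <= delta j x.
Proof.
elim: j x => [|j IH] x /=; case: ifP => // _.
by apply: mulr_ge0; [apply: (q_ge0 qst)|apply: IH].
Qed.

Lemma edge_pos a b : (a, b) \in E -> 0 < q a b.
Proof.
move=> ab; rewrite lt0r (q_ge0 qst) andbT; apply/eqP => h; move: pE.
by rewrite /pgraph (bigD1 (a, b)) //= h mul0r ltxx.
Qed.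

Lemma av_le_delta j x : x \notin A -> avoid_upto q x A j <= 1 - delta j x.
Proof.
elim: j x => [|j IH] x xA; first by rewrite avoid0 /= (negbTE xA) subr0.
rewrite avoidS /= (negbTE xA).
apply: le_trans (_ : \sum_(u | u \notin A) q x u * (1 - delta j u) <= _).
  apply: ler_sum => u uA; apply: ler_wpM2l; first exact: (q_ge0 qst).
  exact: IH.
have -> : \sum_(u | u \notin A) q x u * (1 - delta j u) =
          \sum_u q x u * (1 - delta j u).
  rewrite [RHS](bigID (fun u => u \notin A)) /= [X in _ = _ + X]big1 ?addr0 //.
  by move=> u /negPn uA; case: j {IH} => [|j] /=; rewrite uA subrr mulr0.
rewrite (eq_bigr (fun u => q x u - q x u * delta j u)); last first.
  by move=> u _; rewrite mulrBr mulr1.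
rewrite sumrB (proj2 qst x) lerD2l lerN2 (bigD1 (succ E x)) //= lerDl.
apply: sumr_ge0 => u _; apply: mulr_ge0; [exact: (q_ge0 qst)|exact: delta_ge0].
Qed.

Lemma delta_pos_iter k x j : iter k (succ E) x \in A -> (k <= j)%N ->
  0 < delta j x.
Proof.
elim: k x j => [|k IH] x j.
  by move=> /= xA _; case: j => [|j] /=; rewrite xA.
rewrite iterSr => hk; case: j => [//|j] kj /=.
case: ifP => // /negbT xA; apply: mulr_gt0.
  by apply: edge_pos; apply: (succP G); rewrite inE.
exact: IH.
Qed.

Lemma iter_edge x i : iter i (succ E) x \notin A ->
  (iter i (succ E) x, iter i.+1 (succ E) x) \in E.
Proof. by move=> h; rewrite iterS; apply: (succP G); rewrite inE. Qed.

Lemma exists_exit x : exists2 k, (k <= #|S|)%N & iter k (succ E) x \in A.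
Proof.
case: (boolP [exists k : 'I_#|S|.+1, iter k (succ E) x \in A]).
  by move=> /existsP [k hk]; exists k => //; rewrite -ltnS.
move=> /existsPn hn.
have hn' : forall i, (i <= #|S|)%N -> iter i (succ E) x \notin A.
  by move=> i hi; have := hn (Ordinal (hi : (i < #|S|.+1)%N)).
pose s := mkseq (fun k => iter k (succ E) x) #|S|.+1.
have : ~~ uniq s.
  apply/negP => us; have := uniq_leq_size us (fun z _ => mem_enum predT z).
  by rewrite size_mkseq -cardE ltnn.
case/(uniqPn x) => i [j [ij]]; rewrite size_mkseq => jS.
rewrite !nth_mkseq // ?(ltn_trans ij jS) // => eqij.
have conn : forall d, (i.+1 + d <= j)%N ->
    connect (edge_rel E) (iter i.+1 (succ E) x) (iter (i.+1 + d) (succ E) x).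
  elim=> [|d IHd] hd; first by rewrite addn0 connect0.
  have hd' : (i.+1 + d <= j)%N by lia.
  apply: connect_trans (IHd hd') _; rewrite addnS; apply: edgeC.
  apply: iter_edge; apply: hn'; lia.
have := conn (j - i.+1)%N ltac:(by rewrite subnKC).
rewrite subnKC // -eqij => c.
have [_ [_ H3]] := G.
have e := iter_edge (hn' i ltac:(lia)).
by move: (H3 _ _ e); rewrite c.
Qed.

Lemma delta_pos x : 0 < delta #|S| x.
Proof. by case: (exists_exit x) => k kS hk; apply: delta_pos_iter hk kS. Qed.

Lemma delta_min : exists d : R, [/\ 0 < d, d <= 1 & forall x, d <= delta #|S| x].
Proof.
have : forall l : seq S, exists d : R,
    [/\ 0 < d, d <= 1 & forall x, x \in l -> d <= delta #|S| x].
  elim=> [|x l [d [d0 d1 dl]]]; first by exists 1; split.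
  exists (Num.min d (delta #|S| x)); split.
  - by rewrite lt_min d0 delta_pos.
  - by rewrite ge_min d1.
  - move=> z; rewrite inE => /orP [/eqP ->|zl]; rewrite ge_min ?lexx ?orbT //.
    by rewrite dl.
case/(_ (enum S)) => d [d0 d1 dl]; exists d; split=> // x.
by apply: dl; rewrite mem_enum.
Qed.

Lemma av_mult j n V x : x \notin A ->
  (forall u, u \notin A -> avoid_upto q u A n <= V) ->
  avoid_upto q x A (j + n) <= avoid_upto q x A j * V.
Proof.
elim: j x => [|j IH] x xA hV; first by rewrite add0n avoid0 mul1r; apply: hV.
rewrite addSn !avoidS mulr_suml; apply: ler_sum => u uA.
rewrite -mulrA; apply: ler_wpM2l; first exact: (q_ge0 qst).
exact: IH.
Qed.

Lemma av_small (e : R) : 0 < e -> exists N, forall x, x \notin A ->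
  avoid_upto q x A N <= e.
Proof.
move=> e0; case: delta_min => d [d0 d1 dmin].
have geo : forall k x, x \notin A -> avoid_upto q x A (k * #|S|) <= (1 - d) ^+ k.
  elim=> [|k IH] x xA; first by rewrite mul0n avoid0 expr0.
  rewrite mulSn; apply: le_trans (av_mult _ xA (IH)) _.
  rewrite exprS; apply: ler_wpM2r; first by apply: exprn_ge0; rewrite subr_ge0.
  apply: le_trans (av_le_delta _ xA) _; rewrite lerD2l lerN2; exact: dmin.
have bern : forall k : nat, (1 - d) ^+ k * (1 + k%:R * d) <= 1.
  elim=> [|k IH]; first by rewrite expr0 mul0r addr0 mulr1.
  rewrite exprSr -mulrA; apply: le_trans IH; apply: ler_wpM2l.
    by apply: exprn_ge0; rewrite subr_ge0.
  have k0 : 0 <= k%:R :> R by apply: ler0n.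
  rewrite mulrSr; nra.
pose k := Num.Def.archi_bound (e * d)^-1.
have hk : (e * d)^-1 < k%:R by apply: archi_boundP; rewrite invr_ge0 ltW ?mulr_gt0.
exists (k * #|S|)%N => x xA; apply: le_trans (geo k x xA) _.
have pos : 0 < 1 + k%:R * d by rewrite ltr_wpDr // mulr_ge0 // ltW.
have := bern k; rewrite -ler_pdivlMr // => h; apply: le_trans h _.
rewrite ler_pdivrMr //.
have h2 : 1 < k%:R * (e * d) by rewrite -ltr_pdivrMr ?mulr_gt0 // div1r.
nra.
Qed.

End Decay.


Section Step.
Variables (R : realType) (S : finType) (q : S -> S -> R).
Hypothesis qst : stochastic q.
Variables (A : {set S}) (y : S).
Hypothesis yA : y \in A.

Definition Zs := \sum_(E | is_Cgraphb (~: A) E) pgraph q E.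
Notation H := (Hs q (~: A) y).
Notation ht x n := (hit_at q x A y n).
Notation av x n := (avoid_upto q x A n).

Lemma Zs_ge0 : 0 <= Zs.
Proof. by apply: sumr_ge0 => E _; apply: pgraph_ge0. Qed.

Lemma Hs_ge0 x : 0 <= H x.
Proof. by apply: sumr_ge0 => E _; apply: pgraph_ge0. Qed.

Lemma Hs_y : H y = Zs.
Proof. by rewrite /Hs /Zs; apply: eq_bigl => E; rewrite connect0 andbT. Qed.

Lemma Fs_rec x N : Fs q A y x N.+1 = q x y + \sum_(u | u \notin A) q x u * Fs q A y u N.
Proof.
rewrite /Fs big_nat_recl // hit0 avoidS -addrA; congr (_ + _).
rewrite (eq_bigr (fun n => \sum_(u | u \notin A) q x u * ht u n)); last first.
  by move=> n _; rewrite hitS.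
rewrite exchange_big /= -big_split /=; apply: eq_bigr => u _.
by rewrite mulrDr -mulr_sumr.
Qed.

Lemma Fs_bound N x : x \notin A -> Zs * Fs q A y x N <= H x + Zs * av x N.
Proof.
elim: N x => [|N IH] x xA.
  by rewrite Fs0 avoid0 lerDr; apply: Hs_ge0.
rewrite Fs_rec avoidS mulrDr mulr_sumr.
apply: le_trans (_ : Zs * q x y + \sum_(u | u \notin A) q x u * (H u + Zs * av u N) <= _).
  apply: lerD => //; apply: ler_sum => u uA.
  rewrite mulrCA; apply: ler_wpM2l; first exact: (q_ge0 qst).
  exact: IH.
rewrite (eq_bigr (fun u => q x u * H u + Zs * (q x u * av u N))); last first.
  by move=> u _; rewrite mulrDr mulrCA.
rewrite big_split /= -mulr_sumr addrA lerD2r.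
apply: le_trans (superharm qst _ _) => //; last by rewrite inE.
  rewrite [X in _ <= X](bigID (fun u => u \notin A)) /= [X in X <= _]addrC lerD2l.
  rewrite (bigD1 y) ?yA //= Hs_y mulrC lerDl.
  apply: sumr_ge0 => u _; apply: mulr_ge0; [exact: (q_ge0 qst)|exact: Hs_ge0].
by rewrite inE negbK.
Qed.

Lemma main_ineq s (a : R) (E0 : {set S * S}) :
  is_Cgraph (~: A) E0 -> 0 < pgraph q E0 -> s \notin A -> 0 < Zs ->
  a <= prob_first_hit q s A y -> Zs * a <= H s.
Proof.
move=> G0 p0 sA Z0 ha; apply/ler_addgt0Pr => e e0.
have [N hN] := av_small qst G0 p0 (divr_gt0 e0 Z0).
apply: le_trans (_ : Zs * Fs q A y s N <= _).
  by apply: ler_wpM2l; [exact: ltW|exact: le_trans ha (prob_le qst yA s N)].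
apply: le_trans (Fs_bound N sA) _; rewrite lerD2l.
by rewrite -ler_pdivlMl // mulrC; apply: hN.
Qed.

End Step.


Lemma foldr_muln_le (T : Type) (g : T -> nat) n (s : seq T) :
  (forall x, g x <= n)%N -> (foldr muln 1 (map g s) <= n ^ size s)%N.
Proof.
move=> hg; elim: s => [|x s IH] //=.
by rewrite expnS leq_mul.
Qed.

Lemma foldr_image_le (T : finType) (g : T -> nat) n :
  (forall x, g x <= n)%N -> (foldr muln 1 [seq g x | x : T] <= n ^ #|T|)%N.
Proof.
move=> hg; rewrite cardE /image_mem.
have := foldr_muln_le (enum_mem (mem T)) hg; rewrite size_map //.
Qed.

Section Count.
Variable S : finType.

Lemma card_Cgraphs (C : {set S}) : (1 < #|S|)%N ->
  (#|[set E : {set S * S} | is_Cgraphb C E]| <= #|S|.-1 ^ #|S|)%N.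
Proof.
move=> S2.
pose F := fun x : S => if x \in C then predC1 x else pred1 x.
pose f := fun E : {set S * S} => ([ffun x => succ E x] : {dffun forall x : S, S}).
have inj : {in [set E : {set S * S} | is_Cgraphb C E] &, injective f}.
  move=> E1 E2; rewrite !inE => G1 G2 hf.
  have hs : forall x, succ E1 x = succ E2 x.
    by move=> x; have := congr1 (fun g : {dffun forall x : S, S} => g x) hf; rewrite /f !ffunE.
  apply/setP => -[a b].
  have key : forall E, is_Cgraph C E -> ((a, b) \in E) = (a \in C) && (b == succ E a).
    move=> E G; apply/idP/andP => [ab|[aC /eqP ->]]; last exact: succP G aC.
    by split; [exact: edge_src G ab|rewrite -(succ_uniq G ab)].
  by rewrite (key _ G1) (key _ G2) hs.
rewrite -(card_in_imset inj).
apply: leq_trans (_ : #|family F| <= _)%N.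
  apply: subset_leq_card; apply/fintype.subsetP => g /imsetP [E]; rewrite inE => /is_CgraphbP G ->.
  apply/finfun.familyP => x; rewrite /F /f ffunE; case: ifP => xC /=.
    by rewrite inE; exact: no_loop G (succP G xC).
  by rewrite inE (succ_out G (negbT xC)).
rewrite card_family.
have hF : forall x, (#|F x| <= #|S|.-1)%N.
  move=> x; rewrite /F; case: ifP => _; first by rewrite cardC1.
  by rewrite card1 -ltnS prednK // ltnW.
apply: foldr_image_le => x; exact: hF.
Qed.

Lemma Lconst_ge N : (1 < N)%N -> (N.-1 ^ N <= Lconst N)%N.
Proof.
move=> N2; rewrite /Lconst.
have -> : N = N.-1.+1 by rewrite prednK // ltnW.
rewrite big_nat_recr /=; last by rewrite -ltnS prednK // ltnW.
apply: leq_trans (leq_addl _ _); rewrite -[X in (X <= _)%N]mul1n leq_mul2r.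
by rewrite bin_gt0 leqnSn orbT.
Qed.

End Count.


Section Good.
Variables (R : realType) (S : finType) (q : S -> S -> R).
Hypothesis qst : stochastic q.
Variables (A : {set S}) (y : S).
Hypothesis yA : y \in A.

Lemma exists_good s (a : R) (L : nat) : s \notin A -> 0 < a ->
  0 < max_pgraph q (~: A) -> (0 < L)%N ->
  (#|[set E : {set S * S} | is_Cgraphb (~: A) E]| <= L)%N ->
  a <= prob_first_hit q s A y ->
  exists E, [/\ is_Cgraph (~: A) E, connect (edge_rel E) s y &
             a / L%:R * max_pgraph q (~: A) <= pgraph q E].
Proof.
move=> sA a0 M0 L0 cardL ha; set M := max_pgraph q (~: A).
have [E0 G0 p0] : exists2 E0, is_Cgraph (~: A) E0 & 0 < pgraph q E0.
  case: (boolP [exists E, is_Cgraphb (~: A) E && (0 < pgraph q E)]).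
    by move=> /existsP [E /andP [/is_CgraphbP G p]]; exists E.
  move=> /existsPn h; exfalso; move: M0; apply/negP; rewrite -leNgt.
  apply: bigmax_le => // E vE; move: (h E); rewrite vE /= -leNgt; exact.
have ZM : M <= Zs q A.
  apply: bigmax_le; first exact: Zs_ge0.
  move=> E vE; rewrite /Zs (bigD1 E) //= lerDl.
  by apply: sumr_ge0 => E' _; apply: pgraph_ge0.
have Z0 : 0 < Zs q A := lt_le_trans M0 ZM.
have key := main_ineq qst yA G0 p0 sA Z0 ha.
case: (boolP [exists E, (is_Cgraphb (~: A) E && connect (edge_rel E) s y)
                         && (a / L%:R * M <= pgraph q E)]).
  by move=> /existsP [E /andP [/andP [/is_CgraphbP G c] p]]; exists E.
move=> /existsPn h; exfalso.
have hlt : forall E, is_Cgraphb (~: A) E && connect (edge_rel E) s y ->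
    pgraph q E < a / L%:R * M.
  by move=> E PE; move: (h E); rewrite PE /= -ltNge.
have cM0 : 0 <= a / L%:R * M.
  by rewrite mulr_ge0 // ?divr_ge0 // ltW.
case: (boolP [exists E, is_Cgraphb (~: A) E && connect (edge_rel E) s y]).
  move=> /existsP [E1 PE1].
  have : Hs q (~: A) y s < \sum_(E | is_Cgraphb (~: A) E && connect (edge_rel E) s y)
                              (a / L%:R * M).
    apply: ltr_sum; last exact: hlt.
    by apply/hasP; exists E1 => //; rewrite mem_index_enum.
  set P := [set E : {set S * S} | is_Cgraphb (~: A) E && connect (edge_rel E) s y].
  rewrite (eq_bigl (fun E => E \in P)); last by move=> E; rewrite inE.
  rewrite sumr_const -mulr_natr => hH.
  have cP : (#|P| <= L)%N.
    apply: leq_trans cardL; apply: subset_leq_card; apply/fintype.subsetP => E.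
    by rewrite !inE => /andP [/is_CgraphbP].
  have : a / L%:R * M * #|P|%:R <= a * M.
    apply: le_trans (_ : a / L%:R * M * L%:R <= _).
      by apply: ler_wpM2l => //; rewrite ler_nat.
    rewrite (_ : a / L%:R * M * L%:R = a * M) //; field; by rewrite pnatr_eq0 -lt0n.
  have : a * M <= a * Zs q A by apply: ler_wpM2l => //; exact: ltW.
  move: key hH; rewrite mulrC; lra.
move=> /existsPn hn.
have : Hs q (~: A) y s = 0.
  rewrite /Hs big_pred0 // => E; exact/negbTE/hn.
move: key; rewrite mulrC => key H0; move: key; rewrite H0.
by rewrite leNgt mulr_gt0.
Qed.

End Good.


Section Mix.
Variable S : finType.
Implicit Types (C B : {set S}) (E : {set S * S}).

Definition mix E1 E2 B : {set S * S} :=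
  [set e in E1 | e.1 \in B] :|: [set e in E2 | e.1 \notin B].

Lemma mixE E1 E2 B a b :
  ((a, b) \in mix E1 E2 B) = if a \in B then (a, b) \in E1 else (a, b) \in E2.
Proof. by rewrite /mix !inE /=; case: (a \in B); rewrite ?andbT ?andbF ?orbF. Qed.

Lemma mix_valid C E1 E2 B : is_Cgraph C E1 -> is_Cgraph C E2 ->
  (forall a b, (a, b) \in E1 -> a \in B -> (b \in B) || (b \notin C)) ->
  is_Cgraph C (mix E1 E2 B).
Proof.
move=> G1 G2 clo.
have [U1 [Ou1 A1]] := G1; have [U2 [Ou2 A2]] := G2.
have srcM : forall z w, (z, w) \in mix E1 E2 B -> z \in C.
  by move=> z w; rewrite mixE; case: ifP => _ h; [exact: edge_src G1 h|exact: edge_src G2 h].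
split; [|split].
- move=> s sC; case: (U1 s sC) => t1 [st1 V1]; case: (U2 s sC) => t2 [st2 V2].
  case sB: (s \in B).
    by exists t1; split; [rewrite mixE sB|move=> t'; rewrite mixE sB; apply: V1].
  by exists t2; split; [rewrite mixE sB|move=> t'; rewrite mixE sB; apply: V2].
- move=> s t sC; rewrite mixE; case: ifP => _; [exact: Ou1|exact: Ou2].
- move=> a b ab; apply/negP => ba.
  case aB: (a \in B); move: ab; rewrite mixE aB => ab.
  + have key : forall z, connect (edge_rel (mix E1 E2 B)) z a ->
        (z \in B) || (z \notin C) -> connect (edge_rel E1) z a.
      apply: connect_ind_back; first by move=> _; exact: connect0.
      move=> z w zw _ IH hz.
      have zC := srcM _ _ zw.
      have zB : z \in B by move: hz; rewrite zC orbF.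
      move: zw; rewrite [edge_rel _ _ _]mixE zB => zw.
      exact: connect_trans (edgeC zw) (IH (clo _ _ zw zB)).
    by move: (A1 a b ab); rewrite (key b ba (clo _ _ ab aB)).
  + have aC := edge_src G2 ab.
    have key : forall z, connect (edge_rel (mix E1 E2 B)) z a ->
        (z \notin B) && connect (edge_rel E2) z a.
      apply: connect_ind_back; first by rewrite aB connect0.
      move=> z w zw _ /andP [wB wa].
      move: zw; rewrite [edge_rel _ _ _]mixE; case: ifP => zB zw.
        case/orP: (clo _ _ zw zB) => [wB'|wC]; first by move: wB; rewrite wB'.
        by move: aC; rewrite (terminal G2 wC wa) (negbTE wC).
      by rewrite /= (connect_trans (edgeC zw) wa).
    by move: (A2 a b ab); case/andP: (key b ba) => _ ->.
Qed.

Lemma pgraph_mix (R : realType) (q : S -> S -> R) E1 E2 B :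
  pgraph q (mix E1 E2 B) * pgraph q (mix E2 E1 B) = pgraph q E1 * pgraph q E2.
Proof.
have split_p : forall E, pgraph q E =
    (\prod_(e in E | e.1 \in B) q e.1 e.2) * \prod_(e in E | e.1 \notin B) q e.1 e.2.
  by move=> E; rewrite /pgraph (bigID (fun e => e.1 \in B)).
rewrite !split_p.
have h : forall E E' b, \prod_(e in mix E E' B | (e.1 \in B) == b) q e.1 e.2 =
    \prod_(e in (if b then E else E') | (e.1 \in B) == b) q e.1 e.2.
  move=> E E' b; apply: eq_bigl => -[u v] /=; rewrite mixE.
  by case: (u \in B); case: b; rewrite ?andbT ?andbF.
have h1 := h E1 E2 true; have h2 := h E1 E2 false.
have h3 := h E2 E1 true; have h4 := h E2 E1 false.
rewrite /= in h1 h2 h3 h4.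
have e1 : forall E, \prod_(e in E | e.1 \in B) q e.1 e.2 =
    \prod_(e in E | (e.1 \in B) == true) q e.1 e.2.
  by move=> E; apply: eq_bigl => e; rewrite eqb_id.
have e2 : forall E, \prod_(e in E | e.1 \notin B) q e.1 e.2 =
    \prod_(e in E | (e.1 \in B) == false) q e.1 e.2.
  by move=> E; apply: eq_bigl => e; rewrite eqbF_neg.
rewrite !e1 !e2 h1 h2 h3 h4.
ring.
Qed.

End Mix.


Section Combine.
Variables (R : realType) (S : finType) (q : S -> S -> R).
Hypothesis qst : stochastic q.
Variables (C : {set S}) (y : S).
Hypothesis yC : y \notin C.
Implicit Types (E : {set S * S}).

Definition Bset E := [set x in C | connect (edge_rel E) x y].
Definition Dset E := [set x in C | ~~ connect (edge_rel E) x y].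

Lemma B_closed E a b : is_Cgraph C E -> (a, b) \in E -> a \in Bset E ->
  (b \in Bset E) || (b \notin C).
Proof.
move=> G ab; rewrite inE => /andP [aC ay].
have nay : a != y by apply/eqP => ay'; move: yC; rewrite -ay' aC.
case: (connect_step ay nay) => w aw wy.
have bw : b = w by rewrite (succ_uniq G ab) (succ_uniq G aw).
rewrite inE bw wy andbT; by case: (w \in C).
Qed.

Lemma notB_closed E a b : is_Cgraph C E -> (a, b) \in E -> a \in ~: Bset E ->
  (b \in ~: Bset E) || (b \notin C).
Proof.
move=> G ab; rewrite !inE negb_and => /orP [aC|nay].
  by move: aC; rewrite (edge_src G ab).
apply/orP; left; apply/negP => /andP [_ by'].
by move: nay; rewrite (connect_trans (edgeC ab) by').
Qed.

Lemma mix_swap E1 E2 B : mix E2 E1 B = mix E1 E2 (~: B).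
Proof.
apply/setP => -[a b]; rewrite !mixE inE.
by case: (a \in B).
Qed.

Lemma combine_valid E g : is_Cgraph C E -> is_Cgraph C g ->
  is_Cgraph C (mix E g (Bset E)) /\ is_Cgraph C (mix g E (Bset E)).
Proof.
move=> G Gg; split.
  by apply: mix_valid => // a b ab aB; exact: B_closed G ab aB.
rewrite mix_swap; apply: mix_valid => // a b ab aB; exact: notB_closed G ab aB.
Qed.

Lemma combine_B E g x : is_Cgraph C E -> connect (edge_rel E) x y ->
  connect (edge_rel (mix E g (Bset E))) x y.
Proof.
move=> G; apply: (@connect_ind_back _ _ y
  (fun z => connect (edge_rel (mix E g (Bset E))) z y)); first exact: connect0.
move=> z w zw wy IH; apply: connect_trans _ IH; apply: edgeC.
have zB : z \in Bset E.
  by rewrite inE (edge_src G zw) /=; exact: connect_trans (edgeC zw) wy.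
by rewrite mixE zB.
Qed.

Lemma combine_s E g s : is_Cgraph C E -> connect (edge_rel g) s y ->
  connect (edge_rel (mix E g (Bset E))) s y.
Proof.
move=> G; apply: (@connect_ind_back _ _ y
  (fun z => connect (edge_rel (mix E g (Bset E))) z y)); first exact: connect0.
move=> z w zw _ IH; case zB: (z \in Bset E).
  by apply: combine_B => //; move: zB; rewrite inE => /andP [].
by apply: connect_trans _ IH; apply: edgeC; rewrite mixE zB.
Qed.

Lemma combine_D E g s : is_Cgraph C E -> connect (edge_rel g) s y -> s \in Dset E ->
  (#|Dset (mix E g (Bset E))| < #|Dset E|)%N.
Proof.
move=> G sy sD; rewrite (cardsD1 s (Dset E)) sD add1n ltnS.
apply: subset_leq_card; apply/fintype.subsetP => x.
rewrite !inE => /andP [xC nxh]; rewrite xC /=; apply/andP; split.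
  by apply/eqP => xs; move: nxh; rewrite xs (combine_s G sy).
by apply/negP => xy; move: nxh; rewrite (combine_B _ G xy).
Qed.

End Combine.


Section Iter.
Variables (R : realType) (S : finType) (q : S -> S -> R).
Hypothesis qst : stochastic q.
Variables (C : {set S}) (y : S).
Hypothesis yC : y \notin C.
Implicit Types (E : {set S * S}).

Lemma pgraph_le_max E : is_Cgraph C E -> pgraph q E <= max_pgraph q C.
Proof.
move=> G; rewrite /max_pgraph.
by apply: (le_bigmax_cond 0 (pgraph q) (P := fun E => is_Cgraphb C E)); apply/is_CgraphbP.
Qed.

Lemma bigmax_attained : 0 < max_pgraph q C ->
  exists2 E, is_Cgraph C E & pgraph q E = max_pgraph q C.
Proof.
rewrite /max_pgraph.
pose K := fun v : R => v <= 0 \/ exists2 E, is_Cgraph C E & pgraph q E = v.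
have : K (\big[Num.max/0]_(E | is_Cgraphb C E) pgraph q E).
  apply: big_ind; first by left.
    move=> u v Ku Kv; rewrite maxEle; case: ifP => _; [exact: Kv|exact: Ku].
  by move=> E /is_CgraphbP G; right; exists E.
by case=> [h0 hp|//]; move: hp; rewrite ltNge h0.
Qed.

Lemma star_graph : exists E, is_Cgraph C E /\
  (forall x, x \in C -> connect (edge_rel E) x y).
Proof.
pose E := [set e : S * S | (e.1 \in C) && (e.2 == y)].
have G : is_Cgraph C E.
  split; [|split].
  - move=> s sC; exists y; split; first by rewrite inE /= sC eqxx.
    by move=> t; rewrite inE /= => /andP [_ /eqP].
  - by move=> s t sC; rewrite inE /= (negbTE sC).
  - move=> a b; rewrite inE /= => /andP [aC /eqP ->]; apply/negP => ya.
    have nya : y != a by apply/eqP => ya'; move: yC; rewrite ya' aC.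
    case: (connect_step ya nya) => w; rewrite /edge_rel inE /= (negbTE yC).
    by [].
exists E; split=> // x xC; apply: edgeC; by rewrite inE /= xC eqxx.
Qed.

Variable (c : R).
Hypotheses (c0 : 0 <= c) (c1 : c <= 1) (M0 : 0 < max_pgraph q C).
Hypothesis step : forall s, s \in C -> exists g, [/\ is_Cgraph C g,
  connect (edge_rel g) s y & c * max_pgraph q C <= pgraph q g].

Lemma iterate n : forall E, is_Cgraph C E -> (#|Dset C y E| <= n)%N ->
  exists E', [/\ is_Cgraph C E', (forall x, x \in C -> connect (edge_rel E') x y)
                & c ^+ n * pgraph q E <= pgraph q E'].
Proof.
have pge0 := pgraph_ge0 qst.
elim: n => [|n IH] E G hD.
  exists E; split=> //; last by rewrite expr0 mul1r.
  move=> x xC; apply/negPn/negP => nx.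
  have : x \in Dset C y E by rewrite inE xC nx.
  by move: hD; rewrite leqn0 cards_eq0 => /eqP ->; rewrite inE.
case: (set_0Vmem (Dset C y E)) => [D0|[s sD]].
  exists E; split=> //.
    move=> x xC; apply/negPn/negP => nx.
    have : x \in Dset C y E by rewrite inE xC nx.
    by rewrite D0 inE.
  by apply: ler_piMl => //; apply: exprn_ile1.
have sC : s \in C by move: sD; rewrite inE => /andP [].
case: (step sC) => g [Gg sy pg].
have [Gh Gk] := combine_valid yC G Gg.
have hD' : (#|Dset C y (mix E g (Bset C y E))| <= n)%N.
  by rewrite -ltnS; apply: leq_trans (combine_D G sy sD) hD.
case: (IH _ Gh hD') => E' [G' all' pE'].
exists E'; split=> //.
apply: le_trans pE'; rewrite exprSr -mulrA; apply: ler_wpM2l; first exact: exprn_ge0.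
set M := max_pgraph q C.
have hk := pgraph_le_max Gk.
have prod := pgraph_mix q E g (Bset C y E).
have : c * pgraph q E * M <= pgraph q (mix E g (Bset C y E)) * M.
  apply: le_trans (_ : pgraph q E * pgraph q g <= _).
    by rewrite mulrAC mulrC; apply: ler_wpM2l.
  by rewrite -prod; apply: ler_wpM2l.
by rewrite ler_pM2r.
Qed.

End Iter.


Unset Implicit Arguments. Set Strict Implicit. Set Printing Implicit Defensive.

Theorem lemma5 (R : realType) (S : finType) (q : S -> S -> R)
  (S1 : {set S}) (a : R) :
  (1 < #|S|)%N -> (1 < #|S1|)%N -> 0 < a ->
  stochastic q -> irreducible q ->
  (forall s t, s \in S1 -> t \in S1 ->
     a <= prob_first_hit q s (~: S1 :|: [set t]) t) ->
  forall y, y \in S1 ->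
    exists E : {set S * S},
      eta_maximal q ((a / (Lconst #|S|)%:R) ^+ #|S|) (S1 :\ y) E /\
      (forall s, s \in S1 :\ y -> leads_to (S1 :\ y) E s y).
Proof.
move=> S2 S12 a0 qst _ hyp y yS1.
set C := S1 :\ y; set A := ~: S1 :|: [set y].
have CA : ~: A = C.
  apply/setP => x; rewrite !inE negb_or negbK andbC; by [].
have yA : y \in A by rewrite !inE eqxx orbT.
have yC : y \notin C by rewrite -CA inE negbK.
set L := Lconst #|S|.
have LN : (#|S|.-1 ^ #|S| <= L)%N := Lconst_ge S2.
have L0 : (0 < L)%N.
  by apply: leq_trans LN; rewrite expn_gt0 -ltnS prednK ?S2 // ltnW.
have cardL : (#|[set E : {set S * S} | is_Cgraphb (~: A) E]| <= L)%N.
  exact: leq_trans (card_Cgraphs _ S2) LN.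
have [s0 s0C] : exists s0, s0 \in C.
  apply/set0Pn; rewrite -card_gt0.
  by move: S12; rewrite (cardsD1 y S1) yS1 add1n ltnS.
have a1 : a <= 1.
  have := prob_le qst yA s0 0; rewrite Fs0 => h.
  apply: le_trans (h); apply: hyp => //; by move: s0C; rewrite inE => /andP [].
have L1 : 1 <= (L%:R : R) by rewrite ler1n.
set c := a / L%:R.
have c0 : 0 <= c by rewrite /c divr_ge0 // ltW.
have Lpos : 0 < (L%:R : R) by rewrite ltr0n.
have c1 : c <= 1 by rewrite /c ler_pdivrMr // mul1r; exact: le_trans a1 L1.
have eta0 : 0 <= c ^+ #|S| by apply: exprn_ge0.
case: (boolP (0 < max_pgraph q C)) => M0; last first.
  case: (star_graph yC) => E [G all]; exists E; split.
    split=> //; apply: le_trans (pgraph_ge0 qst E).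
    by apply: mulr_ge0_le0 => //; rewrite leNgt.
  by move=> s sC; split=> //; apply: all.
have step : forall s, s \in C -> exists g, [/\ is_Cgraph C g,
    connect (edge_rel g) s y & c * max_pgraph q C <= pgraph q g].
  move=> s sC.
  have sA : s \notin A by move: sC; rewrite -CA inE.
  have hs : a <= prob_first_hit q s A y.
    by apply: hyp => //; move: sC; rewrite inE => /andP [].
  rewrite -CA in M0 *.
  have := exists_good qst yA sA a0 M0 L0 cardL hs.
  by case=> E [G1 cc1 p1]; exists E; split.
case: (bigmax_attained M0) => Es Gs ps.
case: (iterate qst yC c0 c1 M0 step (n := #|S|) Gs (max_card _)) => E' [G' all' pE'].
exists E'; split; first by split=> //; rewrite -ps.
by move=> s sC; split=> //; apply: all'.
Qed.
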